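(* Let $\mathbb{F}$ be an algebraically closed field with $\mathrm{char}\,\mathbb{F}=2$, and let $\mathcal{A}$ be a (not necessarily unital) subalgebra of $\mathbf{O}$ with $\mathcal{A}\not\subseteq\mathbf{O}_0$ and $\dim\mathcal{A}\ge2$. Then there exists $g\in{\rm G}_2$ such that one of the following holds: (a) $\{e_1,\mathbf{u}_1\}\subseteq g\mathcal{A}$; (b) $\{e_1,\mathbf{v}_1\}\subseteq g\mathcal{A}$; (c) $\{e_1,e_2\}\subseteq g\mathcal{A}$.
   Context: The split octonion algebra $\mathbf{O}$ is the 8-dimensional $\mathbb{F}$-vector space of formal matrices $a=\begin{pmatrix}\alpha&\mathbf{u}\\ \mathbf{v}&\beta\end{pmatrix}$ with $\alpha,\beta\in\mathbb{F}$, $\mathbf{u},\mathbf{v}\in\mathbb{F}^3$, with multiplication $\begin{pmatrix}\alpha&\mathbf{u}\\ \mathbf{v}&\beta\end{pmatrix}\begin{pmatrix}\alpha'&\mathbf{u}'\\ \mathbf{v}'&\beta'\end{pmatrix}=\begin{pmatrix}\alpha\alpha'+\mathbf{u}\cdot\mathbf{v}'&\alpha\mathbf{u}'+\beta'\mathbf{u}-\mathbf{v}\times\mathbf{v}'\\ \alpha'\mathbf{v}+\beta\mathbf{v}'+\mathbf{u}\times\mathbf{u}'&\beta\beta'+\mathbf{v}\cdot\mathbf{u}'\end{pmatrix}$ (dot product and cross product on $\mathbb{F}^3$). Trace $\mathrm{tr}(a)=\alpha+\beta$, $\mathbf{O}_0=\{a\in\mathbf{O}\mid\mathrm{tr}(a)=0\}$.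 With $\mathbf{c}_1$ the first standard basis vector of $\mathbb{F}^3$: $e_1$ has $\alpha=1$ and all else $0$, $e_2$ has $\beta=1$ and all else $0$, $\mathbf{u}_1$ has $\mathbf{u}=\mathbf{c}_1$ and all else $0$, $\mathbf{v}_1$ has $\mathbf{v}=\mathbf{c}_1$ and all else $0$. ${\rm G}_2=\mathrm{Aut}(\mathbf{O})$. *)

(* Defs.v *)
From HB Require Import structures.
From mathcomp Require Import all_boot all_order all_algebra.
Set Implicit Arguments. Unset Strict Implicit. Unset Printing Implicit Defensive.
Import Order.TTheory GRing.Theory.
Local Open Scope ring_scope.

(* The split octonions over F are modelled as row vectors 'rV[F]_8:
   coordinate 0 = alpha, coordinates 1,2,3 = u, coordinates 4,5,6 = v,
   coordinate 7 = beta. *)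
Section Octonions.
Variable F : fieldType.

Definition oct := 'rV[F]_8.

Definition oalpha (a : oct) : F := a 0 (inord 0).
Definition obeta  (a : oct) : F := a 0 (inord 7).
Definition ou (a : oct) : 'rV[F]_3 := \row_(j < 3) a 0 (inord j.+1).
Definition ov (a : oct) : 'rV[F]_3 := \row_(j < 3) a 0 (inord (j + 4)).

(* the formal matrix [[alpha, u], [v, beta]] *)
Definition mkO (al : F) (u v : 'rV[F]_3) (be : F) : oct :=
  \row_(i < 8) nth 0 [:: al; u 0 (inord 0); u 0 (inord 1); u 0 (inord 2);
                          v 0 (inord 0); v 0 (inord 1); v 0 (inord 2); be] i.

Definition dot3 (u v : 'rV[F]_3) : F := \sum_(i < 3) u 0 i * v 0 i.
Definition cross3 (u v : 'rV[F]_3) : 'rV[F]_3 :=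
  let c := fun (w : 'rV[F]_3) (k : nat) => w 0 (inord k) in
  \row_(i < 3) nth 0 [:: c u 1 * c v 2 - c u 2 * c v 1;
                          c u 2 * c v 0 - c u 0 * c v 2;
                          c u 0 * c v 1 - c u 1 * c v 0] i.

Definition omul (a b : oct) : oct :=
  mkO (oalpha a * oalpha b + dot3 (ou a) (ov b))
      (oalpha a *: ou b + obeta b *: ou a - cross3 (ov a) (ov b))
      (oalpha b *: ov a + obeta a *: ov b + cross3 (ou a) (ou b))
      (obeta a * obeta b + dot3 (ov a) (ou b)).

Definition otr (a : oct) : F := oalpha a + obeta a.

Definition O0 : pred oct := fun a => otr a == 0.

Definition c1 : 'rV[F]_3 := \row_(j < 3) (if val j == 0%N then 1 else 0).
Definition e1 : oct := mkO 1 0 0 0.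
Definition e2 : oct := mkO 0 0 0 1.
Definition u1 : oct := mkO 0 c1 0 0.
Definition v1 : oct := mkO 0 0 c1 0.

Definition is_subalgebra (A : {vspace oct}) : Prop :=
  forall x y, x \in A -> y \in A -> omul x y \in A.

Definition isG2 (g : oct -> oct) : Prop :=
  [/\ forall (c : F) (x y : oct), g (c *: x + y) = c *: g x + g y,
      bijective g &
      forall x y, g (omul x y) = omul (g x) (g y)].

Definition in_image (g : oct -> oct) (A : {vspace oct}) (x : oct) : Prop :=
  exists2 a, a \in A & g a = x.

End Octonions.

(* Main.v *)
Require Import Defs.
From HB Require Import structures.
From mathcomp Require Import all_boot all_order all_algebra.
From mathcomp Require Import ring.
From Stdlib Require Import Classical.
Set Implicit Arguments. Unset Strict Implicit. Unset Printing Implicit Defensive.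
Import GRing.Theory.
Local Open Scope ring_scope.



Section S.
Variable F : fieldType.
Definition mk8 (x0 x1 x2 x3 x4 x5 x6 x7 : F) : oct F :=
  \row_(i < 8) nth 0 [:: x0; x1; x2; x3; x4; x5; x6; x7] i.
Definition cx (x : oct F) (k : nat) : F := x 0 (inord k).

Lemma oct_eta (x : oct F) : x = mk8 (cx x 0) (cx x 1) (cx x 2) (cx x 3) (cx x 4) (cx x 5) (cx x 6) (cx x 7).
Proof.
apply/rowP => i; rewrite /mk8 /cx !mxE.
case: i => [[|[|[|[|[|[|[|[|//]]]]]]]] Hi] /=;
by congr (x 0 _); apply: val_inj; rewrite /= inordK.
Qed.

Lemma mk8_eq a0 a1 a2 a3 a4 a5 a6 a7 b0 b1 b2 b3 b4 b5 b6 b7 :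
  a0 = b0 -> a1 = b1 -> a2 = b2 -> a3 = b3 -> a4 = b4 -> a5 = b5 -> a6 = b6 -> a7 = b7 ->
  mk8 a0 a1 a2 a3 a4 a5 a6 a7 = mk8 b0 b1 b2 b3 b4 b5 b6 b7.
Proof. by move=> -> -> -> -> -> -> -> ->. Qed.

Lemma omul_mk8 x0 x1 x2 x3 x4 x5 x6 x7 y0 y1 y2 y3 y4 y5 y6 y7 :
  omul (mk8 x0 x1 x2 x3 x4 x5 x6 x7) (mk8 y0 y1 y2 y3 y4 y5 y6 y7) =
  mk8 (x0*y0 + x1*y4 + x2*y5 + x3*y6)
      (x0*y1 + y7*x1 - (x5*y6 - x6*y5))
      (x0*y2 + y7*x2 - (x6*y4 - x4*y6))
      (x0*y3 + y7*x3 - (x4*y5 - x5*y4))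
      (y0*x4 + x7*y4 + (x2*y3 - x3*y2))
      (y0*x5 + x7*y5 + (x3*y1 - x1*y3))
      (y0*x6 + x7*y6 + (x1*y2 - x2*y1))
      (x7*y7 + x4*y1 + x5*y2 + x6*y3).
Proof.
rewrite /omul /mkO /mk8 /oalpha /obeta /ou /ov /dot3 /cross3.
apply/rowP => i; rewrite !mxE.
have E : forall k, (k < 8)%N -> val (inord k : 'I_8) = k by move=> k Hk; exact: inordK.
have E3 : forall k, (k < 3)%N -> val (inord k : 'I_3) = k by move=> k Hk; exact: inordK.
case: i => [[|[|[|[|[|[|[|[|//]]]]]]]] Hi] /=;
rewrite ?big_ord_recr ?big_ord0 /= ?mxE /=; rewrite ?E3 // ?E //= ?E3 // ?E //=; try ring.
Qed.


Lemma cx_mk8 x0 x1 x2 x3 x4 x5 x6 x7 k : (k < 8)%N ->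
  cx (mk8 x0 x1 x2 x3 x4 x5 x6 x7) k = nth 0 [:: x0; x1; x2; x3; x4; x5; x6; x7] k.
Proof. by move=> Hk; rewrite /cx /mk8 mxE inordK. Qed.

Lemma cx_lin (c : F) (x y : oct F) k : cx (c *: x + y) k = c * cx x k + cx y k.
Proof. by rewrite /cx !mxE. Qed.

Lemma mk8_lin (c : F) a0 a1 a2 a3 a4 a5 a6 a7 b0 b1 b2 b3 b4 b5 b6 b7 :
  c *: mk8 a0 a1 a2 a3 a4 a5 a6 a7 + mk8 b0 b1 b2 b3 b4 b5 b6 b7 =
  mk8 (c*a0+b0) (c*a1+b1) (c*a2+b2) (c*a3+b3) (c*a4+b4) (c*a5+b5) (c*a6+b6) (c*a7+b7).
Proof.
apply/rowP => i; rewrite !mxE.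
by case: i => [[|[|[|[|[|[|[|[|//]]]]]]]] Hi].
Qed.

Definition isAut (g : oct F -> oct F) :=
  (forall (c : F) (x y : oct F), g (c *: x + y) = c *: g x + g y) /\
  (forall x y, g (omul x y) = omul (g x) (g y)).

Definition phi (a0 a1 a2 : F) (x : oct F) : oct F :=
  let X := cx x in
  let au := a0 * X 1%N + a1 * X 2%N + a2 * X 3%N in
  let d := X 0%N - X 7%N in
  mk8 (X 0%N - au)
      (X 1%N + (a1 * X 6%N - a2 * X 5%N))
      (X 2%N + (a2 * X 4%N - a0 * X 6%N))
      (X 3%N + (a0 * X 5%N - a1 * X 4%N))
      (X 4%N + d * a0 - au * a0)
      (X 5%N + d * a1 - au * a1)
      (X 6%N + d * a2 - au * a2)
      (X 7%N + au).

Definition swp (x : oct F) : oct F :=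
  let X := cx x in
  mk8 (X 7%N) (- X 4%N) (- X 5%N) (- X 6%N) (- X 1%N) (- X 2%N) (- X 3%N) (X 0%N).

Definition rtt (x : oct F) : oct F :=
  let X := cx x in
  mk8 (X 0%N) (X 2%N) (X 3%N) (X 1%N) (X 5%N) (X 6%N) (X 4%N) (X 7%N).


Definition shr (c d : F) (x : oct F) : oct F :=
  let X := cx x in
  mk8 (X 0%N) (X 1%N) (X 2%N + c * X 1%N) (X 3%N + d * X 1%N)
      (X 4%N - c * X 5%N - d * X 6%N) (X 5%N) (X 6%N) (X 7%N).


Lemma phi_mk8 a0 a1 a2 x0 x1 x2 x3 x4 x5 x6 x7 :
  phi a0 a1 a2 (mk8 x0 x1 x2 x3 x4 x5 x6 x7) =
  mk8 (x0 - (a0 * x1 + a1 * x2 + a2 * x3))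
      (x1 + (a1 * x6 - a2 * x5))
      (x2 + (a2 * x4 - a0 * x6))
      (x3 + (a0 * x5 - a1 * x4))
      (x4 + (x0 - x7) * a0 - (a0 * x1 + a1 * x2 + a2 * x3) * a0)
      (x5 + (x0 - x7) * a1 - (a0 * x1 + a1 * x2 + a2 * x3) * a1)
      (x6 + (x0 - x7) * a2 - (a0 * x1 + a1 * x2 + a2 * x3) * a2)
      (x7 + (a0 * x1 + a1 * x2 + a2 * x3)).
Proof. by rewrite /phi !cx_mk8. Qed.

Lemma swp_mk8 x0 x1 x2 x3 x4 x5 x6 x7 :
  swp (mk8 x0 x1 x2 x3 x4 x5 x6 x7) = mk8 x7 (- x4) (- x5) (- x6) (- x1) (- x2) (- x3) x0.
Proof. by rewrite /swp !cx_mk8. Qed.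

Lemma rtt_mk8 x0 x1 x2 x3 x4 x5 x6 x7 :
  rtt (mk8 x0 x1 x2 x3 x4 x5 x6 x7) = mk8 x0 x2 x3 x1 x5 x6 x4 x7.
Proof. by rewrite /rtt !cx_mk8. Qed.

Lemma shr_mk8 c d x0 x1 x2 x3 x4 x5 x6 x7 :
  shr c d (mk8 x0 x1 x2 x3 x4 x5 x6 x7) =
  mk8 x0 x1 (x2 + c * x1) (x3 + d * x1) (x4 - c * x5 - d * x6) x5 x6 x7.
Proof. by rewrite /shr !cx_mk8. Qed.

Ltac aut_tac :=
  split; [let c := fresh "c" in let x := fresh "x" in let y := fresh "y" in
          intros c x y; rewrite (oct_eta x) (oct_eta y) mk8_lin
         |let x := fresh "x" in let y := fresh "y" in
          intros x y; rewrite (oct_eta x) (oct_eta y) omul_mk8];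
  rewrite /phi /swp /rtt /shr /= ?mk8_lin ?omul_mk8 !cx_mk8 //=;
  apply: mk8_eq; ring.

Lemma phi_aut a0 a1 a2 : isAut (phi a0 a1 a2).
Proof. aut_tac. Qed.
Lemma swp_aut : isAut swp.
Proof. aut_tac. Qed.
Lemma rtt_aut : isAut rtt.
Proof. aut_tac. Qed.
Lemma shr_aut c d : isAut (shr c d).
Proof. aut_tac. Qed.

Lemma lin_scale (g : oct F -> oct F) :
  (forall (c : F) (x y : oct F), g (c *: x + y) = c *: g x + g y) ->
  forall c x, g (c *: x) = c *: g x.
Proof.
move=> L c x.
have g0 : g 0 = 0.
  have := L 1 0 0; rewrite !scale1r addr0 => H.
  by apply: (addrI (g 0)); rewrite -H addr0.
by have := L c x 0; rewrite !addr0 g0 addr0.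
Qed.

Lemma isG2_of (g h : oct F -> oct F) : isAut g -> cancel g h -> cancel h g -> isG2 g.
Proof.
by move=> [L M] gh hg; split => //; exists h.
Qed.

Lemma isG2_comp (g h : oct F -> oct F) : isG2 g -> isG2 h -> isG2 (g \o h).
Proof.
move=> [Lg Bg Mg] [Lh Bh Mh]; split.
- by move=> c x y /=; rewrite Lh Lg.
- exact: bij_comp.
- by move=> x y /=; rewrite Mh Mg.
Qed.

Ltac coord_tac :=
  let x := fresh "x" in intros x; rewrite [in RHS](oct_eta x) /phi /swp /rtt /shr /= !cx_mk8 //=;
  apply: mk8_eq; ring.

Lemma phiK a0 a1 a2 : cancel (phi a0 a1 a2) (phi (-a0) (-a1) (-a2)).
Proof. coord_tac. Qed.
Lemma swpK : cancel swp swp.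
Proof. coord_tac. Qed.
Lemma rttK : cancel rtt (rtt \o rtt).
Proof. coord_tac. Qed.
Lemma rttK' : cancel (rtt \o rtt) rtt.
Proof. coord_tac. Qed.
Lemma shrK c d : cancel (shr c d) (shr (-c) (-d)).
Proof. coord_tac. Qed.

Lemma phi_G2 a0 a1 a2 : isG2 (phi a0 a1 a2).
Proof.
apply: (isG2_of (phi_aut _ _ _) (phiK _ _ _)).
by have := phiK (-a0) (-a1) (-a2); rewrite !opprK.
Qed.
Lemma swp_G2 : isG2 swp.
Proof. exact: (isG2_of swp_aut swpK swpK). Qed.
Lemma rtt_G2 : isG2 rtt.
Proof. exact: (isG2_of rtt_aut rttK rttK'). Qed.
Lemma shr_G2 c d : isG2 (shr c d).
Proof.
apply: (isG2_of (shr_aut _ _) (shrK _ _)).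
by have := shrK (-c) (-d); rewrite !opprK.
Qed.

Lemma e1_mk8 : e1 F = mk8 1 0 0 0 0 0 0 0.
Proof.
apply/rowP => i; rewrite /e1 /mkO /mk8 !mxE.
by case: i => [[|[|[|[|[|[|[|[|//]]]]]]]] Hi] /=; rewrite ?mxE.
Qed.
Lemma e2_mk8 : e2 F = mk8 0 0 0 0 0 0 0 1.
Proof.
apply/rowP => i; rewrite /e2 /mkO /mk8 !mxE.
by case: i => [[|[|[|[|[|[|[|[|//]]]]]]]] Hi] /=; rewrite ?mxE.
Qed.
Lemma u1_mk8 : u1 F = mk8 0 1 0 0 0 0 0 0.
Proof.
apply/rowP => i; rewrite /u1 /mkO /mk8 /c1 !mxE.
by case: i => [[|[|[|[|[|[|[|[|//]]]]]]]] Hi] /=; rewrite ?mxE ?inordK.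
Qed.
Lemma v1_mk8 : v1 F = mk8 0 0 0 0 1 0 0 0.
Proof.
apply/rowP => i; rewrite /v1 /mkO /mk8 /c1 !mxE.
by case: i => [[|[|[|[|[|[|[|[|//]]]]]]]] Hi] /=; rewrite ?mxE ?inordK.
Qed.
End S.

Arguments swp {F}. Arguments rtt {F}.



Section S2.
Variable F : fieldType.

Lemma conj_core (b0 b1 b2 v0 v1 v2 : F) :
  let s := b0 * v0 + b1 * v1 + b2 * v2 in
  exists g : oct F -> oct F, isG2 g /\
    g (mk8 (1 - s) ((1 - s) * b0) ((1 - s) * b1) ((1 - s) * b2) v0 v1 v2 s) = e1 F.
Proof.
move=> s.
pose h := (swp \o phi b0 b1 b2 \o swp) \o phi v0 v1 v2.
pose g := phi (-v0) (-v1) (-v2) \o (swp \o phi (-b0) (-b1) (-b2) \o swp).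
exists g; split.
  apply: isG2_comp; first exact: phi_G2.
  apply: isG2_comp; last exact: swp_G2.
  apply: isG2_comp; [exact: swp_G2 | exact: phi_G2].
have <- : h (e1 F) = mk8 (1 - s) ((1 - s) * b0) ((1 - s) * b1) ((1 - s) * b2) v0 v1 v2 s.
  rewrite e1_mk8 /h /s /comp phi_mk8 swp_mk8 phi_mk8 swp_mk8.
  apply: mk8_eq; ring.
by rewrite /g /h /comp swpK phiK swpK phiK.
Qed.


Lemma conj1 (e : oct F) : cx e 0 != 0 -> cx e 0 + cx e 7 = 1 ->
  cx e 0 * cx e 7 = cx e 1 * cx e 4 + cx e 2 * cx e 5 + cx e 3 * cx e 6 ->
  exists g : oct F -> oct F, isG2 g /\ g e = e1 F.
Proof.
move=> Ha Ht Hn.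
pose b0 := cx e 1 / cx e 0. pose b1 := cx e 2 / cx e 0. pose b2 := cx e 3 / cx e 0.
have Hs : cx e 7 = b0 * cx e 4 + b1 * cx e 5 + b2 * cx e 6.
  by apply: (mulfI Ha); rewrite Hn /b0 /b1 /b2; field.
have Ha1 : cx e 0 = 1 - cx e 7 by rewrite -Ht addrK.
have := conj_core b0 b1 b2 (cx e 4) (cx e 5) (cx e 6); rewrite /= => -[g [Hg Hge]].
exists g; split => //; rewrite -Hge; apply: f_equal.
rewrite {1}(oct_eta e); apply: mk8_eq; rewrite -?Hs -?Ha1 //.
- by rewrite /b0; field.
- by rewrite /b1; field.
- by rewrite /b2; field.
Qed.

Lemma conj_idem (e : oct F) : cx e 0 + cx e 7 = 1 ->
  cx e 0 * cx e 7 = cx e 1 * cx e 4 + cx e 2 * cx e 5 + cx e 3 * cx e 6 ->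
  exists g : oct F -> oct F, isG2 g /\ g e = e1 F.
Proof.
move=> Ht Hn.
have [Ha|Ha] := eqVneq (cx e 0) 0; last exact: conj1.
have E : forall k, cx (swp e) k = cx (swp e) k by [].
have [g [Hg Hge]] : exists g : oct F -> oct F, isG2 g /\ g (swp e) = e1 F.
  have Es : swp e = mk8 (cx e 7) (- cx e 4) (- cx e 5) (- cx e 6) (- cx e 1) (- cx e 2) (- cx e 3) (cx e 0).
    by rewrite {1}(oct_eta e) swp_mk8.
  apply: conj1; rewrite Es !cx_mk8 //=.
  - by move: Ht; rewrite Ha add0r => ->; exact: oner_neq0.
  - by rewrite addrC.
  - by rewrite mulrC Hn; ring.
exists (g \o swp); split; first by apply: isG2_comp => //; exact: swp_G2.
by [].
Qed.

End S2.



Section S3.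
Variable F : fieldType.

Lemma ulemma (y1 y2 y3 : F) : ~~ [&& y1 == 0, y2 == 0 & y3 == 0] ->
  exists h : oct F -> oct F, [/\ isG2 h,
    (forall p q, h (mk8 p 0 0 0 0 0 0 q) = mk8 p 0 0 0 0 0 0 q) &
    exists2 w, w != 0 & h (mk8 0 y1 y2 y3 0 0 0 0) = mk8 0 w 0 0 0 0 0 0].
Proof.
have [H1|H1] := eqVneq y1 0.
  have [H2|H2] := eqVneq y2 0.
    rewrite H1 H2 /= => H3.
    exists (rtt \o rtt); split.
    - by apply: isG2_comp; exact: rtt_G2.
    - by move=> p q; rewrite /comp !rtt_mk8.
    - by exists y3 => //; rewrite /comp !rtt_mk8.
  move=> _.
  exists (shr (- y3 / y2) 0 \o rtt); split.
  - by apply: isG2_comp; [exact: shr_G2|exact: rtt_G2].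
  - by move=> p q; rewrite /comp rtt_mk8 shr_mk8; apply: mk8_eq; ring.
  - exists y2 => //; rewrite /comp rtt_mk8 shr_mk8; apply: mk8_eq => //; rewrite ?H1; by field.
move=> _.
exists (shr (- y2 / y1) (- y3 / y1)); split.
- exact: shr_G2.
- by move=> p q; rewrite shr_mk8; apply: mk8_eq; ring.
- exists y1 => //; rewrite shr_mk8; apply: mk8_eq => //; by field.
Qed.

End S3.



Section S4.
Variable F : fieldType.

Lemma mk8Z (c : F) a0 a1 a2 a3 a4 a5 a6 a7 :
  c *: mk8 a0 a1 a2 a3 a4 a5 a6 a7 =
  mk8 (c*a0) (c*a1) (c*a2) (c*a3) (c*a4) (c*a5) (c*a6) (c*a7).
Proof.
apply/rowP => i; rewrite !mxE.
by case: i => [[|[|[|[|[|[|[|[|//]]]]]]]] Hi].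
Qed.

Lemma mk8D a0 a1 a2 a3 a4 a5 a6 a7 b0 b1 b2 b3 b4 b5 b6 b7 :
  mk8 a0 a1 a2 a3 a4 a5 a6 a7 + mk8 b0 b1 b2 b3 b4 b5 b6 b7 =
  mk8 (a0+b0) (a1+b1) (a2+b2) (a3+b3) (a4+b4) (a5+b5) (a6+b6) (a7+b7) :> oct F.
Proof.
apply/rowP => i; rewrite !mxE.
by case: i => [[|[|[|[|[|[|[|[|//]]]]]]]] Hi].
Qed.

Lemma img_lin (g : oct F -> oct F) A c y z : isG2 g ->
  in_image g A y -> in_image g A z -> in_image g A (c *: y + z).
Proof.
move=> [L _ _] [a Ha <-] [b Hb <-]; exists (c *: a + b); last by rewrite L.
by rewrite memvD // memvZ.
Qed.

Lemma img_scale (g : oct F -> oct F) A c y : isG2 g ->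
  in_image g A y -> in_image g A (c *: y).
Proof.
move=> [L _ _] [a Ha <-]; exists (c *: a); first by rewrite memvZ.
by rewrite (lin_scale L).
Qed.

Lemma img_mul (g : oct F -> oct F) A y z : isG2 g -> is_subalgebra A ->
  in_image g A y -> in_image g A z -> in_image g A (omul y z).
Proof.
move=> [_ _ M] HA [a Ha <-] [b Hb <-]; exists (omul a b); last by rewrite M.
exact: HA.
Qed.

Lemma img_comp (g h : oct F -> oct F) A y : isG2 h ->
  in_image g A y -> in_image (h \o g) A (h y).
Proof. by move=> _ [a Ha <-]; exists a. Qed.

Lemma one_eq (a : oct F) :
  let n := cx a 0 * cx a 7 - (cx a 1 * cx a 4 + cx a 2 * cx a 5 + cx a 3 * cx a 6) in
  n != 0 ->
  mk8 1 0 0 0 0 0 0 1 = n^-1 *: ((-1) *: omul a a + (cx a 0 + cx a 7) *: a).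
Proof.
move=> n Hn; rewrite /n in Hn *.
rewrite [in RHS](oct_eta a) omul_mk8 !mk8Z mk8D mk8Z !cx_mk8 //=; apply: mk8_eq; by field.
Qed.

Lemma idem_combo (a : oct F) (m : F) :
  let t := cx a 0 + cx a 7 in
  let n := cx a 0 * cx a 7 - (cx a 1 * cx a 4 + cx a 2 * cx a 5 + cx a 3 * cx a 6) in
  let e := t^-1 *: a + m *: mk8 1 0 0 0 0 0 0 1 in
  t != 0 ->
  cx e 0 + cx e 7 = 1 + m * 2%:R /\
  cx e 0 * cx e 7 - (cx e 1 * cx e 4 + cx e 2 * cx e 5 + cx e 3 * cx e 6) =
    n / t ^+ 2 + m + m ^+ 2.
Proof.
move=> t n e Ht; rewrite /e /n; rewrite /t in Ht *.
rewrite [a in _ *: a + _](oct_eta a) !mk8Z mk8D !cx_mk8 //=.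
by split; field.
Qed.

End S4.



Theorem lemma6p10 (F : closedFieldType) (A : {vspace oct F}) :
  2%N \in [pchar F] ->
  is_subalgebra A ->
  ~ (forall a, a \in A -> O0 a) ->
  (2 <= \dim A)%N ->
  exists g : oct F -> oct F, isG2 g /\
    [\/ in_image g A (e1 F) /\ in_image g A (u1 F),
        in_image g A (e1 F) /\ in_image g A (v1 F) |
        in_image g A (e1 F) /\ in_image g A (e2 F)].
Proof.
move=> Hc Hsub Hnot Hdim.
have two0 : (2%:R : F) = 0 := pcharf0 Hc.
have [a Ha Hta] : exists2 a, a \in A & cx a 0 + cx a 7 != 0.
  apply: NNPP => H; apply: Hnot => a Ha.
  case: (boolP (O0 a)) => // Hn; exfalso; apply: H; exists a => //.
have [e He [Hte Hne]] : exists2 e, e \in A & (cx e 0 + cx e 7 = 1 /\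
    cx e 0 * cx e 7 = cx e 1 * cx e 4 + cx e 2 * cx e 5 + cx e 3 * cx e 6).
  pose t := cx a 0 + cx a 7.
  pose n := cx a 0 * cx a 7 - (cx a 1 * cx a 4 + cx a 2 * cx a 5 + cx a 3 * cx a 6).
  have [m Hm Hmn] : exists2 m : F, t^-1 *: a + m *: mk8 1 0 0 0 0 0 0 1 \in A &
      n / t ^+ 2 + m + m ^+ 2 = 0.
    have [Hn|Hn] := eqVneq n 0.
      exists 0; first by rewrite scale0r addr0 memvZ.
      by rewrite Hn mul0r !add0r expr0n.
    have [r Hr] := @solve_monicpoly F 2%N (fun i => if i == 0%N then - n / t ^+ 2 else 1) isT.
    rewrite !big_ord_recr big_ord0 /= in Hr.
    exists (r - 1).
      rewrite memvD // ?memvZ // (one_eq Hn) memvZ // memvD // memvZ //.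
      exact: Hsub.
    move: Hr; rewrite expr0 expr1 add0r !mulr1 mul1r => Hr.
    have -> : n / t ^+ 2 + (r - 1) + (r - 1) ^+ 2 = n / t ^+ 2 + (r ^+ 2) - r by ring.
    by rewrite Hr; ring.
  have [H1 H2] := idem_combo m Hta.
  exists (t^-1 *: a + m *: mk8 1 0 0 0 0 0 0 1) => //; split.
    by rewrite H1 two0 mulr0 addr0.
  by apply/eqP; rewrite -subr_eq0; apply/eqP; rewrite H2.
have [g0 [Hg0 Hg0e]] := conj_idem Hte Hne.
have [x0 Hx0 Hx0n] : exists2 x0, x0 \in A & x0 \notin <[e]>%VS.
  apply: NNPP => H.
  have : (A <= <[e]>)%VS.
    apply/subvP => y Hy; case: (boolP (y \in <[e]>%VS)) => // Hn; exfalso; apply: H.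
    by exists y.
  move/dimvS; rewrite dim_vline => H'.
  by have := leq_trans Hdim H'; case: (e != 0).
have Ix : in_image g0 A (g0 x0) by exists x0.
have Ie : in_image g0 A (e1 F) by exists e.
have [x Ex] : exists x, g0 x0 = x by eexists.
rewrite Ex in Ix.
have [Lg0 Bg0 Mg0] := Hg0.
have Iexe : in_image g0 A (omul x (e1 F)) by apply: img_mul.
have Iexe2 : in_image g0 A (omul (e1 F) (omul x (e1 F))) by apply: img_mul.
have Iex : in_image g0 A (omul (e1 F) x) by apply: img_mul.
have [H7|H7] := eqVneq (cx x 7) 0; last first.
  exists g0; split => //; apply: Or33; split => //.
  have -> : e2 F = (cx x 7)^-1 *: (omul (e1 F) (omul x (e1 F)) + ((-1) *: omul (e1 F) x +
       ((-1) *: omul x (e1 F) + x))).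
    rewrite (oct_eta x) e1_mk8 e2_mk8 !omul_mk8 !mk8Z !mk8D mk8Z !cx_mk8 //=.
    apply: mk8_eq; by field.
  apply: img_scale => //.
  rewrite -[omul _ (omul _ _)]scale1r; apply: img_lin => //.
  apply: img_lin => //; apply: img_lin => //.
case: (boolP [&& cx x 1 == 0, cx x 2 == 0 & cx x 3 == 0]) => Hu; last first.
  have [h [Hh Hfix [w Hw Hhw]]] := ulemma Hu.
  exists (h \o g0); split; first exact: isG2_comp.
  have He1 : h (e1 F) = e1 F by rewrite e1_mk8 Hfix.
  apply: Or31; split; first by rewrite -He1; apply: img_comp.
  have -> : u1 F = h (w^-1 *: ((-1) *: omul (e1 F) (omul x (e1 F)) + omul (e1 F) x)).
    have [Lh _ _] := Hh.
    rewrite (lin_scale Lh).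
    have -> : (-1) *: omul (e1 F) (omul x (e1 F)) + omul (e1 F) x = mk8 0 (cx x 1) (cx x 2) (cx x 3) 0 0 0 0.
      rewrite [in LHS](oct_eta x) e1_mk8 !omul_mk8 !mk8Z !mk8D.
      apply: mk8_eq; ring.
    rewrite Hhw mk8Z u1_mk8; apply: mk8_eq; rewrite ?mulr0 //; by field.
  apply: img_comp => //; apply: img_scale => //; apply: img_lin => //.
case: (boolP [&& cx x 4 == 0, cx x 5 == 0 & cx x 6 == 0]) => Hv; last first.
  have Hv' : ~~ [&& - cx x 4 == 0, - cx x 5 == 0 & - cx x 6 == 0] by rewrite !oppr_eq0.
  have [h [Hh Hfix [w Hw Hhw]]] := ulemma Hv'.
  have Hh' : isG2 (swp \o h \o swp).
    apply: isG2_comp; last exact: swp_G2.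
    apply: isG2_comp => //; exact: swp_G2.
  exists ((swp \o h \o swp) \o g0); split; first exact: isG2_comp.
  have He1 : (swp \o h \o swp) (e1 F) = e1 F.
    by rewrite /comp e1_mk8 swp_mk8 !oppr0 Hfix swp_mk8 !oppr0.
  apply: Or32; split; first by rewrite -He1; apply: img_comp.
  have -> : v1 F = (swp \o h \o swp)
      ((- w)^-1 *: ((-1) *: omul (e1 F) (omul x (e1 F)) + omul x (e1 F))).
    have [Lh _ _] := Hh'.
    rewrite (lin_scale Lh).
    have -> : (-1) *: omul (e1 F) (omul x (e1 F)) + omul x (e1 F) = mk8 0 0 0 0 (cx x 4) (cx x 5) (cx x 6) 0.
      rewrite [in LHS](oct_eta x) e1_mk8 !omul_mk8 !mk8Z !mk8D.
      apply: mk8_eq; ring.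
    rewrite /comp swp_mk8 !oppr0 Hhw swp_mk8 !oppr0 mk8Z v1_mk8; apply: mk8_eq; rewrite ?mulr0 //.
    by field; rewrite oppr_eq0.
  apply: img_comp => //; apply: img_scale => //; apply: img_lin => //.
exfalso; move: Hu Hv => /and3P[/eqP H1 /eqP H2 /eqP H3] /and3P[/eqP H4 /eqP H5 /eqP H6].
have Hx : x = cx x 0 *: e1 F.
  rewrite {1}(oct_eta x) e1_mk8 mk8Z H1 H2 H3 H4 H5 H6 H7; apply: mk8_eq; ring.
move: Hx; rewrite -Hg0e -(lin_scale Lg0) -Ex => /(bij_inj Bg0) Hx0e.
by move: Hx0n; rewrite Hx0e memvZ ?memv_line.
Qed.
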